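(* Let $\{e_i\}_{i=1}^\infty$ be the canonical orthonormal basis of the real Hilbert space $\ell_2$, and let $a_i\neq0$ ($i=1,2,\dots$) be real numbers with $\sum_{i=1}^\infty a_i^2<\infty$. Define $x_k=a_k(e_1+e_{k+1})$ for $k=1,2,\dots$, and let $L$ be the right shift operator on $\ell_2$, $L(c_1,c_2,\dots)=(0,c_1,c_2,\dots)$. Then the family \[ \{e_i\}_{i=1}^\infty\cup\{2^{-i}L^ix_k\}_{i=0,\,k=1}^{\infty,\ \infty}\] is a frame for $\ell_2$ which is injective.
   Context: A family $\{y_k\}$ in $\ell_2$ is called injective if whenever a Hilbert–Schmidt self-adjoint operator $T$ on $\ell_2$ satisfies $\langle Ty_k,y_k\rangle=0$ for all $k$, then $T=0$. *)

(* Defs.v *)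
(* Real sequence space l2 over an abstract realType R,
   indices shifted to start at 0 (e_1 of the paper is unit 0). *)
From HB Require Import structures.
From mathcomp Require Import all_boot all_order all_algebra.
From mathcomp Require Import all_classical all_reals all_analysis.
Set Implicit Arguments. Unset Strict Implicit. Unset Printing Implicit Defensive.
Import Order.TTheory GRing.Theory Num.Theory numFieldNormedType.Exports.
Local Open Scope classical_set_scope.
Local Open Scope ring_scope.

Section L2.
Variable R : realType.

Definition ell2 (x : nat -> R) : Prop :=
  (\esum_(k in [set: nat]) ((x k) ^+ 2)%:E < +oo)%E.

Definition l2inner (x y : nat -> R) : R := limn (series (fun k => x k * y k) : R^nat).

Definition l2norm2 (x : nat -> R) : R := l2inner x x.

Definition unitv (i : nat) : nat -> R := fun n => if n == i then 1 else 0.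

Definition rshift (c : nat -> R) : nat -> R :=
  fun n => if n is n'.+1 then c n' else 0.

Definition is_frame (I : choiceType) (y : I -> nat -> R) : Prop :=
  (forall i, ell2 (y i)) /\
  exists A B : R, 0 < A /\ 0 < B /\
    forall x, ell2 x ->
      ((A * l2norm2 x)%:E <= \esum_(i in [set: I]) ((l2inner x (y i)) ^+ 2)%:E)%E /\
      (\esum_(i in [set: I]) ((l2inner x (y i)) ^+ 2)%:E <= (B * l2norm2 x)%:E)%E.

(* bounded linear operator on l2 (values off l2 are irrelevant) *)
Definition bounded_linear_op (T : (nat -> R) -> nat -> R) : Prop :=
  (forall x, ell2 x -> ell2 (T x)) /\
  (forall (a : R) x y, ell2 x -> ell2 y ->
     T (fun n => a * x n + y n) = (fun n => a * T x n + T y n)) /\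
  (exists C : R, forall x, ell2 x -> l2norm2 (T x) <= C * l2norm2 x).

Definition hilbert_schmidt (T : (nat -> R) -> nat -> R) : Prop :=
  bounded_linear_op T /\
  (\esum_(i in [set: nat]) (l2norm2 (T (unitv i)))%:E < +oo)%E.

Definition self_adjoint (T : (nat -> R) -> nat -> R) : Prop :=
  forall x y, ell2 x -> ell2 y -> l2inner (T x) y = l2inner x (T y).

Definition injective_family (I : choiceType) (y : I -> nat -> R) : Prop :=
  forall T, hilbert_schmidt T -> self_adjoint T ->
    (forall k, l2inner (T (y k)) (y k) = 0) ->
    forall x, ell2 x -> T x = (fun _ => 0).

(* x_k = a_k (e_1 + e_{k+1}), 0-indexed: x k = a k (e 0 + e (k+1)) *)
Definition xvec (a : nat -> R) (k : nat) : nat -> R :=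
  fun n => a k * (unitv 0 n + unitv k.+1 n).

Definition thm_family (a : nat -> R) (j : nat + (nat * nat)) : nat -> R :=
  match j with
  | inl i => unitv i
  | inr (i, k) => fun n => (2 ^- i) * iter i rshift (xvec a k) n
  end.

End L2.

(* Main.v *)
Require Import Defs.
From HB Require Import structures.
From mathcomp Require Import all_boot all_order all_algebra.
From mathcomp Require Import all_classical all_reals all_analysis.
From mathcomp Require Import ring lra.
Import Order.TTheory GRing.Theory Num.Theory numFieldNormedType.Exports.
Local Open Scope classical_set_scope.
Local Open Scope ring_scope.

Section H.
Variable R : realType.

Lemma lim_series_fin (f : nat -> R) N : (forall k, (N <= k)%N -> f k = 0) ->
  limn (series f) = \sum_(0 <= k < N) f k.
Proof.
move=> f0; have h : series f @ \oo --> \sum_(0 <= k < N) f k.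
  apply: cvg_near_cst; near=> n.
rewrite /series/= [LHS](@big_cat_nat _ _ _ N 0 n) //=; last by near: n; apply: nbhs_infty_ge.
rewrite [X in _ + X]big1_seq ?addr0// => k /andP[_]; rewrite mem_index_iota => /andP[+ _].
exact: f0.
exact: cvg_lim h.
Unshelve. all: by end_near.
Qed.

Lemma sum_unitv (y : nat -> R) i N : (i < N)%N ->
  \sum_(0 <= k < N) y k * unitv R i k = y i.
Proof.
move=> iN; rewrite big_mkord (bigD1 (Ordinal iN)) //= big1 ?addr0.
  by rewrite /unitv eqxx mulr1.
move=> j hj; rewrite /unitv ifF ?mulr0 //; apply: contraNF hj => /eqP h.
by apply/eqP/val_inj.
Qed.

Lemma l2inner_unitv (y : nat -> R) i : l2inner y (unitv R i) = y i.
Proof.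
rewrite /l2inner (lim_series_fin _ i.+1) ?sum_unitv// => k ik.
by rewrite /unitv ifF ?mulr0// gtn_eqF.
Qed.

Lemma l2innerC (x y : nat -> R) : l2inner x y = l2inner y x.
Proof.
rewrite /l2inner.
by have -> : (fun k => x k * y k) = (fun k => y k * x k) by apply/funext => k; rewrite mulrC.
Qed.

Lemma l2inner_unitv2 (y : nat -> R) c i j :
  l2inner y (fun n => c * (unitv R i n + unitv R j n)) = c * (y i + y j).
Proof.
rewrite /l2inner (lim_series_fin _ (i + j).+1).
  under eq_bigr do rewrite mulrCA mulrDr.
  rewrite -mulr_sumr big_split /= !sum_unitv //; rewrite ltnS ?leq_addr ?leq_addl//.
move=> k ik; rewrite /unitv !ifF ?addr0 ?mulr0//; apply: gtn_eqF;
  apply: leq_trans ik; rewrite ltnS ?leq_addr ?leq_addl//.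
Qed.

Lemma iter_xvec (a : nat -> R) i k :
  iter i (@Defs.rshift R) (xvec a k) = fun n => a k * (unitv R i n + unitv R (i + k.+1) n).
Proof.
elim: i => [|i IH] /=; first by apply/funext => n; rewrite /xvec add0n.
apply/funext => -[|n] /=; first by rewrite /unitv /= addr0 mulr0.
by rewrite IH /unitv /= addSn.
Qed.


Lemma fam_inr (a : nat -> R) i k : thm_family a (inr (i, k)) =
  fun n => (2 ^- i * a k) * (unitv R i n + unitv R (i + k.+1) n).
Proof. by rewrite /= iter_xvec; apply/funext => n; rewrite mulrA. Qed.

Lemma nneseries_EFin (g : nat -> R) : cvgn (series g) ->
  (\sum_(k <oo) (g k)%:E)%E = (limn (series g))%:E.
Proof.
move=> cg; rewrite -EFin_lim //; apply: congr_lim; apply/funext => n /=.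
by rewrite sumEFin.
Qed.

Lemma ell2_fin (f : nat -> R) N : (forall k, (N <= k)%N -> f k = 0) -> ell2 f.
Proof.
move=> f0; rewrite /ell2 -nneseries_esumT; last by move=> n; rewrite lee_fin sqr_ge0.
rewrite nneseries_EFin ?ltry//.
apply/cvg_ex; exists (\sum_(0 <= k < N) f k ^+ 2).
apply: cvg_near_cst; near=> n.
rewrite /series/= [LHS](@big_cat_nat _ _ _ N 0 n) //=; last by near: n; apply: nbhs_infty_ge.
rewrite [X in _ + X]big1_seq ?addr0// => k /andP[_]; rewrite mem_index_iota => /andP[+ _].
by move/f0 => ->; rewrite expr0n.
Unshelve. all: by end_near.
Qed.

Lemma ell2_unitv i : ell2 (unitv R i).
Proof. by apply: (ell2_fin _ i.+1) => k ik; rewrite /unitv ifF// gtn_eqF. Qed.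

Lemma ell2_unitv2 c i j : ell2 (fun n => c * (unitv R i n + unitv R j n)).
Proof.
apply: (ell2_fin _ (i + j).+1) => k ik; rewrite /unitv !ifF ?addr0 ?mulr0//;
  apply: gtn_eqF; apply: leq_trans ik; rewrite ltnS ?leq_addr ?leq_addl//.
Qed.

Lemma l2norm2E (x : nat -> R) : ell2 x ->
  (l2norm2 x)%:E = (\esum_(k in [set: nat]) ((x k) ^+ 2)%:E)%E.
Proof.
move=> hx; have x0 : forall k, (0 <= (x k ^+ 2)%:E)%E by move=> k; rewrite lee_fin sqr_ge0.
rewrite -nneseries_esumT// nneseries_EFin; last first.
  by apply: nnseries_is_cvg => [k|]; [exact: sqr_ge0| rewrite nneseries_esumT].
by [].
Qed.

Lemma sq_le_norm (x : nat -> R) j : ell2 x -> x j ^+ 2 <= l2norm2 x.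
Proof.
move=> hx; rewrite -lee_fin l2norm2E//; apply: esum_ge; exists [set j].
  by split => //; exact: finite_set1.
by rewrite fsbig_set1.
Qed.

Lemma esum_subset (T : choiceType) (A B : set T) (g : T -> \bar R) :
  A `<=` B -> (forall i, (0 <= g i)%E) ->
  (\esum_(i in A) g i <= \esum_(i in B) g i)%E.
Proof.
move=> AB g0; rewrite (esum_mkcond A) (esum_mkcond B); apply: le_esum => i _.
case: ifPn => [/set_mem/AB/mem_set -> //|_]; case: ifP => //.
Qed.


Lemma esum_EFinZ (c : R) (f : nat -> R) : 0 <= c -> (forall k, 0 <= f k) ->
  (\esum_(k in [set: nat]) ((c * f k)%:E) = c%:E * \esum_(k in [set: nat]) (f k)%:E)%E.
Proof.
move=> c0 f0.
have -> : (fun k => (c * f k)%:E) = (fun k => c%:E * (f k)%:E)%E by apply/funext => k.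
rewrite -[LHS]nneseries_esumT; last by move=> n; rewrite -EFinM lee_fin mulr_ge0.
rewrite nneseriesZl; last by move=> n _; rewrite lee_fin.
by rewrite nneseries_esumT // => n; rewrite lee_fin.
Qed.

Lemma geo_sq : (fun i : nat => (2 ^- i : R) ^+ 2) = geometric 1 (4^-1).
Proof.
apply/funext => i /=; rewrite mul1r -exprVn -exprM mulnC exprM.
by congr (_ ^+ _); rewrite exprVn expr2 -natrM.
Qed.

Lemma geo_val : limn (series (geometric 1 (4^-1 : R))) = (1 - 4^-1)^-1.
Proof.
have hz : `|4^-1 : R| < 1 by rewrite ger0_norm ?invr_ge0// invf_lt1// ltr1n.
by rewrite (cvg_lim _ (@cvg_geometric_series _ 1 _ hz)) ?mul1r.
Qed.

Lemma geo_le2 : (1 - 4^-1 : R)^-1 <= 2.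
Proof.
have -> : (1 - 4^-1 : R) = 3 / 4 by field.
rewrite invf_div ler_pdivrMr //; lra.
Qed.

Lemma esum_geo (c : R) : 0 <= c ->
  (\esum_(i in [set: nat]) ((c * (2 ^- i) ^+ 2)%:E) = (c * (1 - 4^-1)^-1)%:E)%E.
Proof.
move=> c0; rewrite esum_EFinZ //.
rewrite -nneseries_esumT; last by move=> n; rewrite lee_fin sqr_ge0.
rewrite nneseries_EFin geo_sq ?geo_val//.
have hz : `|4^-1 : R| < 1 by rewrite ger0_norm ?invr_ge0// invf_lt1// ltr1n.
by have := @cvg_geometric_series _ 1 _ hz; rewrite mul1r.
Qed.


Lemma frame_lower (a : nat -> R) x : ell2 x ->
  ((1 * l2norm2 x)%:E <= \esum_(j in [set: nat + nat * nat])
      ((l2inner x (thm_family a j)) ^+ 2)%:E)%E.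
Proof.
move=> hx; rewrite mul1r l2norm2E//.
rewrite (_ : (\esum_(k in [set: nat]) (x k ^+ 2)%:E)%E =
   (\esum_(j in inl @` [set: nat]) ((l2inner x (thm_family a j)) ^+ 2)%:E)%E).
  by apply: esum_subset => // j; rewrite lee_fin sqr_ge0.
rewrite (esum_image [set: nat] inl); last by move=> u v _ _ [].
by apply: eq_esum => i _ /=; rewrite l2inner_unitv.
Qed.

Lemma frame_upper (a : nat -> R) x S : ell2 x ->
  (\esum_(k in [set: nat]) ((a k) ^+ 2)%:E)%E = S%:E ->
  (\esum_(j in [set: nat + nat * nat]) ((l2inner x (thm_family a j)) ^+ 2)%:E
     <= ((1 + 8 * S) * l2norm2 x)%:E)%E.
Proof.
move=> hx hS; set N := l2norm2 x.
have N0 : 0 <= N by apply: le_trans (sq_le_norm _ 0 hx); exact: sqr_ge0.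
have S0 : 0 <= S.
  by rewrite -lee_fin -hS; apply: esum_ge0 => k _; rewrite lee_fin sqr_ge0.
pose h (j : nat + nat * nat) : \bar R := match j with
  | inl i => (x i ^+ 2)%:E
  | inr (i, k) => ((4 * N) * ((2 ^- i) ^+ 2 * a k ^+ 2))%:E end.
have h0 : forall j, (0 <= h j)%E.
  move=> [i|[i k]]; rewrite /h /= lee_fin ?sqr_ge0//.
  by apply: mulr_ge0; [apply: mulr_ge0 | apply: mulr_ge0; exact: sqr_ge0].
apply: (le_trans (le_esum (b := h) _)).
  move=> [i|[i k]] _ /=; first by rewrite l2inner_unitv.
  rewrite -/(thm_family a (inr (i, k))) fam_inr l2inner_unitv2 lee_fin.
  rewrite exprMn mulrC -exprMn [X in _ <= X]mulrC.
  rewrite -[X in _ <= X * _]exprMn [X in _ <= X]mulrC exprMn.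
  apply: ler_wpM2r; first exact: sqr_ge0.
  have h1 := sq_le_norm _ i hx; have h2 := sq_le_norm _ (i + k.+1) hx.
  rewrite -/N in h1 h2; nra.
rewrite (esumID (inl @` [set: nat])); last by move=> j _; exact: h0.
rewrite setTI (esum_image [set: nat] inl); last by move=> u v _ _ [].
have -> : [set: nat + nat * nat] `&` ~` (inl @` [set: nat]) = inr @` [set: nat * nat].
  apply/seteqP; split => -[i|p] //=.
  - by move=> [_ /(_ (ex_intro2 _ _ i I erefl))].
  - by move=> _; exists p.
  - by move=> [q _ ].
  - by move=> _; split => // -[].
rewrite (esum_image [set: nat * nat] inr); last by move=> u v _ _ [].
rewrite (_ : \esum_(i in [set: nat]) h (inl i) = N%:E)%E; last first.
  by rewrite l2norm2E.
rewrite (_ : \esum_(p in [set: nat * nat]) h (inr p) =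
   ((4 * N * S) * (1 - 4^-1)^-1)%:E)%E.
  rewrite -EFinD lee_fin.
  have g2 := geo_le2.
  have g3 : 0 <= 2 - (1 - 4^-1 : R)^-1 by rewrite subr_ge0.
  have := mulr_ge0 (mulr_ge0 N0 S0) g3.
  nra.
rewrite (_ : [set: nat * nat] = [set: nat] `*`` (fun _ => [set: nat])); last first.
  by apply/seteqP; split => -[].
rewrite (@eq_esum _ _ _ _ (fun p => h (inr (p.1, p.2)))); last by move=> [].
rewrite -(esum_esum (a := fun i k => h (inr (i, k)))); last by move=> *; exact: h0.
rewrite (@eq_esum _ _ _ _ (fun i => ((4 * N * S) * (2 ^- i) ^+ 2)%:E)).
  by rewrite esum_geo // !mulr_ge0.
move=> i _ /=.
rewrite (@eq_esum _ _ _ _ (fun k => ((4 * N * (2 ^- i) ^+ 2) * a k ^+ 2)%:E)); last first.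
  by move=> k _ /=; rewrite mulrA.
rewrite esum_EFinZ ?hS -?EFinM.
- by congr EFin; ring.
- by rewrite !mulr_ge0 ?sqr_ge0.
- by move=> k; exact: sqr_ge0.
Qed.


Lemma inj_part (a : nat -> R) : (forall k, a k != 0) ->
  injective_family (thm_family a).
Proof.
move=> ha0 T [[Tl [Tlin _]] _] Tsa hk x hx.
have ell0 : ell2 (fun _ : nat => 0 : R).
  by apply: (ell2_fin _ 0).
have T0 : T (fun _ => 0) = (fun _ => 0).
  have e := Tlin 1 _ _ ell0 ell0.
  rewrite (_ : (fun n => 1 * 0 + 0) = fun _ => 0) in e; last first.
    by apply/funext => n; rewrite mul1r addr0.
  apply/funext => n; have := congr1 (fun f => f n) e => /=; rewrite mul1r.
  set u := T _ n => hu; lra.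
have Msym : forall p q, T (unitv R p) q = T (unitv R q) p.
  move=> p q; rewrite -(l2inner_unitv (T (unitv R p)) q) (Tsa _ _ (ell2_unitv p) (ell2_unitv q)).
  by rewrite l2innerC l2inner_unitv.
have Mdiag : forall p, T (unitv R p) p = 0.
  by move=> p; have := hk (inl p); rewrite /= l2inner_unitv.
have Moff : forall i k, T (unitv R i) (i + k.+1) = 0.
  move=> i k; have := hk (inr (i, k)).
  rewrite fam_inr.
  set c := 2 ^- i * a k; set j := i + k.+1.
  have hc : c != 0.
    by rewrite mulf_neq0 ?ha0 // invr_neq0 // expf_neq0 // pnatr_eq0.
  have hu : ell2 (fun n => 1 * unitv R i n + unitv R j n).
    have := ell2_unitv2 1 i j.
    by rewrite (_ : (fun n => 1 * (unitv R i n + unitv R j n)) = 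
                    (fun n => 1 * unitv R i n + unitv R j n)) // ; apply/funext => n; rewrite !mul1r.
  have lin : T (fun n => c * (unitv R i n + unitv R j n)) =
             fun n => c * (T (unitv R i) n + T (unitv R j) n).
    have e1 := Tlin 1 _ _ (ell2_unitv i) (ell2_unitv j).
    have e2 := Tlin c _ _ hu ell0.
    rewrite (_ : (fun n => c * (unitv R i n + unitv R j n)) =
                 (fun n => c * (1 * unitv R i n + unitv R j n) + 0)); last first.
      by apply/funext => n; rewrite mul1r addr0.
    rewrite e2 e1 T0; apply/funext => n; rewrite mul1r addr0 //.
  rewrite lin l2inner_unitv2 Mdiag (Mdiag j) (Msym j i) add0r addr0 -mulrDr.
  rewrite -/j => /eqP; rewrite mulf_eq0 (negbTE hc) /= mulf_eq0 (negbTE hc) /= => /eqP htt.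
  lra.
have Te0 : forall p, T (unitv R p) = fun _ => 0.
  move=> p; apply/funext => q; case: (ltngtP p q) => [pq|qp|->]; last exact: Mdiag.
  - rewrite (_ : q = (p + (q - p.+1).+1)%N); first exact: Moff.
    by rewrite addnS -addSn subnKC.
  - rewrite Msym (_ : p = (q + (p - q.+1).+1)%N); first exact: Moff.
    by rewrite addnS -addSn subnKC.
apply/funext => m; rewrite -(l2inner_unitv (T x) m) (Tsa _ _ hx (ell2_unitv m)) Te0.
rewrite /l2inner (lim_series_fin _ 0) ?big_geq //.
by move=> k _; rewrite mulr0.
Qed.

End H.

Theorem mainTheorem14 (R : realType) (a : nat -> R)
  (ha0 : forall k, a k != 0)
  (hsum : (\esum_(k in [set: nat]) ((a k) ^+ 2)%:E < +oo)%E) :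
  is_frame (thm_family a) /\ injective_family (thm_family a).
Proof.
split; last exact: inj_part.
have E0 : (0 <= \esum_(k in [set: nat]) ((a k) ^+ 2)%:E)%E.
  by apply: esum_ge0 => k _; rewrite lee_fin sqr_ge0.
set S := fine (\esum_(k in [set: nat]) ((a k) ^+ 2)%:E)%E.
have hS : (\esum_(k in [set: nat]) ((a k) ^+ 2)%:E)%E = S%:E.
  by rewrite fineK // ge0_fin_numE.
have S0 : 0 <= S by rewrite -lee_fin -hS.
split.
  by move=> [i|[i k]]; [exact: ell2_unitv | rewrite fam_inr; exact: ell2_unitv2].
exists 1, (1 + 8 * S); split => //; split.
  by apply: ltr_pwDl => //; rewrite mulr_ge0.
move=> x hx; split; first exact: frame_lower.
exact: frame_upper.
Qed.
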